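(* Let $\mathcal{C}\le\mathbb{F}_q^n$ be a linear code with $q\neq 2$, and assume every codeword of $\mathcal{C}$ has even weight. Let $c\in\mathcal{C}$ be a codeword of weight $2$ with support $\{i,j\}$, and let $x\in\mathcal{C}$ be arbitrary. Then there exists $\lambda\in\mathbb{F}_q$ such that $(x_i,x_j)=(\lambda c_i,\lambda c_j)$.
   Context: The support of $c\in\mathbb{F}_q^n$ is $\{k: c_k\neq 0\}$ and its weight is the size of its support. *)

(* Defs.v *)
From HB Require Import structures.
From mathcomp Require Import all_boot all_order all_algebra.
Set Implicit Arguments. Unset Strict Implicit. Unset Printing Implicit Defensive.
Import GRing.Theory.
Local Open Scope ring_scope.

(* Vectors of F_q^n are row vectors 'rV[F]_n; a linear code is a subspace
   C : {vspace 'rV[F]_n}. *)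
Definition supp (F : finFieldType) (n : nat) (c : 'rV[F]_n) : {set 'I_n} :=
  [set k | c ord0 k != 0].
Definition weight (F : finFieldType) (n : nat) (c : 'rV[F]_n) : nat :=
  #|supp c|.

(* Main.v *)
Require Import Defs.
From HB Require Import structures.
From mathcomp Require Import all_boot all_order all_algebra.
Import GRing.Theory.
Local Open Scope ring_scope.

Theorem lemma3p1 (F : finFieldType) (n : nat) (C : {vspace 'rV[F]_n})
  (hq : #|F| != 2%N)
  (heven : forall x : 'rV[F]_n, x \in C -> ~~ odd (weight x))
  (c : 'rV[F]_n) (i j : 'I_n)
  (hc : c \in C) (hw : weight c = 2%N) (hsupp : supp c = ([set i; j] : {set 'I_n}))
  (x : 'rV[F]_n) (hx : x \in C) :
  exists lambda : F, x ord0 i = lambda * c ord0 i /\ x ord0 j = lambda * c ord0 j.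
Proof.
have cS k : (c ord0 k != 0) = (k \in [set i; j]) by rewrite -hsupp inE.
have ci : c ord0 i != 0 by rewrite cS !inE eqxx.
have cj : c ord0 j != 0 by rewrite cS !inE eqxx orbT.
have cO k : k != i -> k != j -> c ord0 k = 0.
  by move=> ki kj; apply/eqP; rewrite -[_ == 0]negbK cS !inE (negbTE ki) (negbTE kj).
have nij : i != j.
  apply/negP=> /eqP eij; move: hw; rewrite /weight hsupp eij setUid cards1 //.
set lam := x ord0 i / c ord0 i.
exists lam.
have xi : x ord0 i = lam * c ord0 i by rewrite /lam divfK.
split=> //.
set y := x - lam *: c.
have yC : y \in C by rewrite memvB // memvZ.
have yi : y ord0 i = 0 by rewrite !mxE xi subrr.
apply/eqP; rewrite -subr_eq0; apply/negP=> /negP yj.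
have yj' : y ord0 j != 0 by rewrite !mxE.
set a := - y ord0 j / c ord0 j.
have : (0 < #|[set: F] :\: [set (0:F)%R; a]|)%N.
  rewrite cardsD setTI cardsT.
  have h2 : (#|[set (0:F)%R; a]| <= 2)%N by rewrite cards2; case: (_ == _).
  have h1 : (2 <= #|F|)%N.
    have := cards2 (0:F)%R 1%R; rewrite eq_sym oner_neq0 /= => <-.
    exact: max_card.
  have h3 : (3 <= #|F|)%N by rewrite ltn_neqAle eq_sym hq h1.
  rewrite subn_gt0; exact: (leq_ltn_trans h2 h3).
case/card_gt0P=> mu; rewrite !inE andbT negb_or => /andP [mu0 mua].
set z := y + mu *: c.
have zC : z \in C by rewrite memvD // memvZ.
have Hs : supp z = i |: supp y.
  apply/setP=> k; rewrite !inE !mxE.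
  case: (eqVneq k i) => [->|ki].
    by rewrite xi subrr add0r mulf_neq0.
  rewrite orFb.
  case: (eqVneq k j) => [->|kj].
    rewrite yj.
    apply/negP=> /eqP e; move: mua; rewrite /a.
    have -> : mu = - y ord0 j / c ord0 j.
      apply: (mulIf cj); rewrite divfK // !mxE.
      by apply: (addrI (x ord0 j - lam * c ord0 j)); rewrite e subrr.
    by rewrite eqxx.
  by rewrite cO // !mulr0 subr0 addr0.
have := heven _ zC; rewrite /weight Hs cardsU1 inE yi eqxx /=.
by rewrite add0n negbK (negbTE (heven _ yC)).
Qed.
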